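(* If an $n$-Brinkhuis $(k_0,k_1,k_2)$-triple exists, then $s\ge k^{1/(n-1)}$, where $k=\min(k_0,k_1,k_2)$.
   Context: Let $\Sigma=\{0,1,2\}$. A word over $\Sigma$ is square-free if it cannot be written as $xyyz$ with $y$ nonempty. $\mathcal{A}(n)$ is the set of square-free words of length $n$, $a(n)=|\mathcal{A}(n)|$, and $s=\lim_{n\to\infty}a(n)^{1/n}$ (this limit exists). An $n$-Brinkhuis $(k_0,k_1,k_2)$-triple, where $k_0,k_1,k_2\ge1$, consists of three sets $\mathcal{B}^{(i)}=\{w^{(i)}_j: 1\le j\le k_i\}\subset\mathcal{A}(n)$ for $i\in\{0,1,2\}$. Each $\mathcal{B}^{(i)}$ has $k_i$ distinct square-free words of length $n$. The defining condition: for every square-free word $ii'i''\in\mathcal{A}(3)$ and all $1\le j\le k_i$, $1\le j'\le k_{i'}$, $1\le j''\le k_{i''}$, the concatenation $w^{(i)}_jw^{(i')}_{j'}w^{(i'')}_{j''}$ is square-free. *)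

(* Defs.v *)
From mathcomp Require Import all_boot.
From mathcomp Require Import boolp.
From Stdlib Require Import Reals.
From Coquelicot Require Import Coquelicot.

Set Implicit Arguments.
Unset Strict Implicit.
Unset Printing Implicit Defensive.

Notation letter := 'I_3.

Definition squarefree (w : seq letter) : Prop :=
  forall x y z : seq letter, w = x ++ y ++ y ++ z -> y = [::].

Definition A (n : nat) : {set n.-tuple letter} :=
  [set w : n.-tuple letter | `[< squarefree w >]].

Definition a (n : nat) : nat := #|A n|.

Definition brinkhuis_triple (n : nat) (k : letter -> nat)
    (B : letter -> {set n.-tuple letter}) : Prop :=
  (forall i, B i \subset A n) /\
  (forall i, #|B i| = k i) /\
  (forall i i' i'' : letter, squarefree [:: i; i'; i''] ->
     forall u v w : n.-tuple letter,
       u \in B i -> v \in B i' -> w \in B i'' ->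
       squarefree (tval u ++ tval v ++ tval w)).

(* Main.v *)
Require Import Defs.
From mathcomp Require Import all_boot.
From Stdlib Require Import Reals.
From Coquelicot Require Import Coquelicot.
From mathcomp Require Import boolp.
From Stdlib Require Import Lra.
From mathcomp Require Import zify.

Section Basics.
Local Open Scope nat_scope.

Definition sq (s : seq letter) (st L : nat) :=
  0 < L /\ st + L + L <= size s /\
  forall i, i < L -> nth ord0 s (st + i) = nth ord0 s (st + L + i).

Lemma sq_not_sf s st L : sq s st L -> ~ squarefree s.
Proof.
move=> [L0 [HL Hi]] Hsf.
set y1 := take L (drop st s).
set y2 := take L (drop (st + L) s).
have Hs : s = take st s ++ y1 ++ y2 ++ drop (st + L + L) s.
  rewrite /y1 /y2 -{1}(cat_take_drop st s); congr (_ ++ _).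
  rewrite -{1}(cat_take_drop L (drop st s)); congr (_ ++ _).
  rewrite drop_drop addnC -{1}(cat_take_drop L (drop (st + L) s)).
  by rewrite drop_drop (addnC L (st + L)).
have Hy : y1 = y2.
  apply: (@eq_from_nth _ ord0).
    by rewrite /y1 /y2 !size_take !size_drop; do 2 case: ifP; lia.
  move=> i; rewrite /y1 size_take size_drop => Hi'.
  have HiL : i < L by move: Hi'; case: ifP; lia.
  by rewrite /y1 /y2 !nth_take // !nth_drop Hi.
have := Hsf _ _ _ (etrans Hs (congr1 (fun t => _ ++ y1 ++ t ++ _) (esym Hy))).
move=> Hnil; move: (congr1 size Hnil); rewrite /y1 size_take size_drop /=.
case: ifP; lia.
Qed.

Lemma sf_of_nosq s : (forall st L, ~ sq s st L) -> squarefree s.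
Proof.
move=> H x y z Hs; case: y Hs => [//|c y] Hs; exfalso.
set ys := c :: y in Hs.
apply: (H (size x) (size ys)); split; first by [].
split; first by rewrite Hs !size_cat; lia.
move=> i Hi; rewrite Hs !nth_cat.
have -> : (size x + i < size x) = false by lia.
have -> : (size x + size ys + i < size x) = false by lia.
have -> : size x + i - size x = i by lia.
have -> : size x + size ys + i - size x = size ys + i by lia.
rewrite Hi.
have -> : (size ys + i < size ys) = false by lia.
have -> : size ys + i - size ys = i by lia.
by rewrite Hi.
Qed.

Lemma sf3 (a b c : letter) : a != b -> b != c -> squarefree [:: a; b; c].
Proof.
move=> ab bc; apply: sf_of_nosq => st L [L0 [HL Hi]].
have HL1 : L = 1 by move: HL => /=; lia.
subst L; have := Hi 0 isT; rewrite !addn0.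
have : st < 2 by move: HL => /=; lia.
case: st {Hi HL} => [|[|st]] //= _.
- by move=> e; move: ab; rewrite e eqxx.
- by move=> e; move: bc; rewrite e eqxx.
Qed.

Lemma other (a : letter) : exists c : letter, c != a.
Proof.
case: a => [[|k] Hk].
- by exists (inord 1); apply/eqP => /(congr1 val) /=; rewrite inordK.
- by exists ord0.
Qed.

End Basics.

Ltac ifs := repeat match goal with |- context [if ?b then _ else _] =>
  (have -> : b = true by lia) || (have -> : b = false by lia) end.

Section Core.
Local Open Scope nat_scope.
Variable n : nat.
Hypothesis n0 : 0 < n.
Variable inB : letter -> pred (seq letter).
Hypothesis Hsize : forall i u, inB i u -> size u = n.
Hypothesis Hne : forall i, exists u, inB i u.
Hypothesis Htri : forall i i' i'' u v w, i != i' -> i' != i'' ->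
  inB i u -> inB i' v -> inB i'' w -> forall st L, ~ sq (u ++ v ++ w) st L.

Lemma disj i i' u : inB i u -> inB i' u -> i = i'.
Proof.
move=> h1 h2; apply/eqP; apply/negPn/negP => ne.
have ne' : i' != i by rewrite eq_sym.
apply: (Htri _ _ _ _ _ _ ne ne' h1 h2 h1 0 n); have su := Hsize _ _ h1.
split=> //; split; first by rewrite !size_cat su; lia.
move=> x xn; rewrite !nth_cat su; ifs.
by congr nth; lia.
Qed.

Lemma unal i i' e u v z p : inB i u -> inB i' v -> i != i' -> inB e z ->
  0 < p < n ->
  (forall x, x < n -> nth ord0 z x = nth ord0 (u ++ v) (p + x)) -> False.
Proof.
move=> hu hv ii' hz /andP [p0 pn] Hz.
have su := Hsize _ _ hu; have sv := Hsize _ _ hv; have sz := Hsize _ _ hz.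
case: (eqVneq e i) => [ei | ei].
- subst e; have [c ci] := other i; have [t ht] := Hne c.
  have st := Hsize _ _ ht.
  apply: (Htri _ _ _ _ _ _ ci ii' ht hz hv (n + (n - p)) p); split=> //.
  split; first by rewrite !size_cat st sz sv; lia.
  move=> x xp; rewrite !nth_cat st sz; ifs.
  rewrite Hz; last by lia.
  rewrite nth_cat su; ifs; congr nth; lia.
- have [c ce] := other e; have [t ht] := Hne c.
  have st := Hsize _ _ ht.
  have ie : i != e by rewrite eq_sym.
  have ec : e != c by rewrite eq_sym.
  apply: (Htri _ _ _ _ _ _ ie ec hu hz ht p (n - p)); split; first by lia.
  split; first by rewrite !size_cat st sz su; lia.
  move=> x xp; rewrite !nth_cat su sz; ifs.
  rewrite Hz; last by lia.
  rewrite nth_cat su; ifs; congr nth; lia.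
Qed.

Variable m : nat.
Variable w : seq letter.
Hypothesis Hwsz : size w = m.
Hypothesis Hw : forall st L, ~ sq w st L.
Variable f : nat -> seq letter.
Hypothesis Hf : forall j, j < m -> inB (nth ord0 w j) (f j).
Variable U : seq letter.
Hypothesis HUsz : size U = m * n.
Hypothesis HU : forall t x, t < m -> x < n ->
  nth ord0 U (t * n + x) = nth ord0 (f t) x.

Lemma wneq j : j.+1 < m -> nth ord0 w j != nth ord0 w j.+1.
Proof.
move=> jm; apply/eqP => e; apply: (Hw j 1); split=> //; split; first by rewrite Hwsz; lia.
by move=> i; rewrite ltnS leqn0 => /eqP ->; rewrite !addn0 addn1.
Qed.

Lemma wsq st q : 0 < q -> st + q + q <= m ->
  (forall t, t < q -> nth ord0 w (st + t) = nth ord0 w (st + q + t)) -> False.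
Proof. move=> q0 hq ht; apply: (Hw st q); split=> //; split=> //; by rewrite Hwsz. Qed.

Lemma f_eq t t' : t < m -> t' < m ->
  (forall x, x < n -> nth ord0 (f t) x = nth ord0 (f t') x) ->
  nth ord0 w t = nth ord0 w t'.
Proof.
move=> tm t'm hx; apply: (disj _ _ _ (Hf _ tm)).
have -> : f t = f t'; last exact: Hf.
apply: (@eq_from_nth _ ord0).
  by rewrite (Hsize _ _ (Hf _ tm)) (Hsize _ _ (Hf _ t'm)).
by move=> x; rewrite (Hsize _ _ (Hf _ tm)); apply: hx.
Qed.

Lemma core st L : ~ sq U st L.
Proof.
move=> [L0 [HL Heq]]; rewrite HUsz in HL.
have Hst := divn_eq st n; have rn := ltn_pmod st n0.
move: (st %/ n) (st %% n) Hst rn Heq HL => j r Hst rn Heq HL; subst st.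
have HU' : forall t x y, t < m -> x < n -> y = t * n + x ->
    nth ord0 U y = nth ord0 (f t) x.
  by move=> t x y tm xn ->; apply: HU.
have jm : j < m by nia.
case: (eqVneq (L %% n) 0) => HLn.
- have HLq := divn_eq L n; rewrite HLn addn0 in HLq.
  move: (L %/ n) HLq => q HLq; subst L.
  have q0 : 0 < q by move: L0; rewrite muln_gt0; case/andP.
  have blk : forall t, j * n + r <= t * n -> t * n + n <= j * n + r + q * n ->
      nth ord0 w t = nth ord0 w (t + q).
    move=> t h1 h2.
    have tm : t < m by nia.
    have tqm : t + q < m by nia.
    apply: f_eq => // x xn.
    rewrite -(HU' t x (j * n + r + (t * n + x - (j * n + r)))) //; last by lia.
    rewrite Heq; last by nia.
    apply: HU' => //; nia.
  case: (posnP r) => [r0 | rpos].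
  + subst r; apply: (wsq j q q0); first by nia.
    move=> t tq; rewrite (blk (j + t)); [congr nth; lia | nia | nia].
  + have jqm : j + q + q < m by nia.
    have Hmid : forall t, 0 < t -> t < q ->
        nth ord0 w (j + t) = nth ord0 w (j + q + t).
      move=> t t0 tq; rewrite (blk (j + t)); [congr nth; lia | nia | nia].
    have Hz1 : forall x, x < r ->
        nth ord0 (f (j + q)) x = nth ord0 (f (j + q + q)) x.
      move=> x xr.
      rewrite -(HU' (j + q) x (j * n + r + (q * n - r + x))); [|nia|lia|nia].
      rewrite Heq; last by nia.
      apply: HU'; [done | lia | nia].
    have Hz2 : forall x, r <= x -> x < n ->
        nth ord0 (f (j + q)) x = nth ord0 (f j) x.
      move=> x rx xn.
      rewrite -(HU' (j + q) x (j * n + r + q * n + (x - r))); [|nia|lia|nia].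
      rewrite -Heq; last by nia.
      apply: HU'; [done | lia | nia].
    case: (eqVneq (nth ord0 w j) (nth ord0 w (j + q))) => e1.
      apply: (wsq j q q0); first by lia.
      move=> [|t] tq; first by rewrite !addn0.
      by apply: Hmid.
    case: (eqVneq (nth ord0 w (j + q)) (nth ord0 w (j + q + q))) => e2.
      apply: (wsq (j + 1) q q0); first by lia.
      move=> t tq; case: (ltnP (t + 1) q) => h.
        have := Hmid (t + 1) ltac:(lia) h.
        have -> : j + (t + 1) = j + 1 + t by lia.
        by have -> : j + q + (t + 1) = j + 1 + q + t by lia.
      have -> : j + 1 + t = j + q by lia.
      by have -> : j + 1 + q + t = j + q + q by lia.
    have hj := Hf _ jm; have hq : j + q < m by lia.
    have hjq := Hf _ hq; have hjqq := Hf _ jqm.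
    have s1 := Hsize _ _ hj; have s2 := Hsize _ _ hjq; have s3 := Hsize _ _ hjqq.
    apply: (Htri _ _ _ _ _ _ e1 e2 hj hjq hjqq r n); split=> //.
    split; first by rewrite !size_cat s1 s2 s3; lia.
    move=> i iN; rewrite !nth_cat s1 s2.
    case: (ltnP (r + i) n) => h; ifs.
      by rewrite Hz2; [congr nth; lia | lia | lia].
    by rewrite Hz1; [congr nth; lia | lia].
- case: (leqP (r + L + L) (n + n + n)) => hA.
  + pose l1 := if j.+1 < m then nth ord0 w j.+1 else xchoose (other (nth ord0 w j)).
    pose l2 := if j.+2 < m then nth ord0 w j.+2 else xchoose (other l1).
    pose g0 := f j.
    pose g1 := if j.+1 < m then f j.+1 else xchoose (Hne l1).
    pose g2 := if j.+2 < m then f j.+2 else xchoose (Hne l2).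
    have h0 : inB (nth ord0 w j) g0 := Hf _ jm.
    have h1 : inB l1 g1.
      by rewrite /l1 /g1; case: ifP => h; [exact: Hf | exact: (xchooseP (Hne _))].
    have h2 : inB l2 g2.
      by rewrite /l2 /g2; case: ifP => h; [exact: Hf | exact: (xchooseP (Hne _))].
    have n01 : nth ord0 w j != l1.
      rewrite /l1; case: ifP => h; first exact: wneq.
      by rewrite eq_sym; exact: (xchooseP (other _)).
    have n12 : l1 != l2.
      rewrite /l2; case: ifP => h.
        have h' : j.+1 < m by lia.
        by rewrite /l1 h'; exact: wneq.
      by rewrite eq_sym; exact: (xchooseP (other _)).
    have sg0 := Hsize _ _ h0; have sg1 := Hsize _ _ h1; have sg2 := Hsize _ _ h2.
    have HG : forall y, y < n + n + n -> j * n + y < m * n ->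
        nth ord0 U (j * n + y) = nth ord0 (g0 ++ g1 ++ g2) y.
      move=> y y3 ym; rewrite !nth_cat sg0 sg1.
      case: (ltnP y n) => h.
        by ifs; apply: HU'; [done | done | lia].
      case: (ltnP y (n + n)) => h'.
        have jm1 : j.+1 < m by nia.
        by ifs; rewrite /g1 jm1; apply: HU'; [done | lia | nia].
      have jm2 : j.+2 < m by nia.
      by ifs; rewrite /g2 jm2; apply: HU'; [done | lia | nia].
    apply: (Htri _ _ _ _ _ _ n01 n12 h0 h1 h2 r L); split=> //.
    split; first by rewrite !size_cat sg0 sg1 sg2; lia.
    move=> i iL; rewrite -HG; [|lia|lia]; rewrite -HG; [|lia|lia].
    by rewrite !addnA; apply: Heq.
  + have [t [d [tm [dn [dmod Hd]]]]] : exists t d, t < m /\ d + n <= m * n /\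
        d %% n != 0 /\ forall x, x < n -> nth ord0 (f t) x = nth ord0 U (d + x).
      case: (leqP (n + n) (r + L)) => hB.
      * exists j.+1, (j.+1 * n + L); split; first by nia.
        split; first by nia.
        split; first by rewrite modnMDl.
        move=> x xn; rewrite -(HU' j.+1 x (j * n + r + (n - r + x))); [|nia|done|nia].
        rewrite Heq; last by lia.
        congr nth; nia.
      * exists j.+2, (j.+2 * n - L); split; first by nia.
        split; first by nia.
        split.
          apply/negP => /eqP dm.
          have := divn_eq (j.+2 * n - L) n; rewrite dm addn0 => hd.
          have hL : L = (j.+2 - (j.+2 * n - L) %/ n) * n.
            by rewrite mulnBl -hd; nia.
          by move: HLn; rewrite hL modnMl eqxx.
        move=> x xn; rewrite -(HU' j.+2 x (j * n + r + L + (n + n - r - L + x))); [|nia|done|nia].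
        rewrite -Heq; last by nia.
        congr nth; nia.
    have Hdd := divn_eq d n; have pn := ltn_pmod d n0.
    move: (d %/ n) (d %% n) Hdd pn dmod => t' p Hdd pn p0; subst d.
    have t'm : t'.+1 < m by nia.
    have ht' := Hf _ (ltnW t'm); have st' := Hsize _ _ ht'.
    apply: (unal _ _ _ _ _ _ p ht' (Hf _ t'm) (wneq _ t'm) (Hf _ tm)).
      by apply/andP; split; lia.
    move=> x xn; rewrite Hd // nth_cat st'.
    case: (ltnP (p + x) n) => h; ifs.
      by apply: HU'; [lia | done | lia].
    by apply: HU'; [done | lia | nia].
Qed.

End Core.



Section Flat.
Local Open Scope nat_scope.
Variable n : nat.
Lemma flat_size (bs : seq (seq letter)) :
  all (fun b => size b == n) bs -> size (flatten bs) = size bs * n.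
Proof. by elim: bs => [|b bs IH] //= /andP [/eqP hb hbs]; rewrite size_cat hb IH // mulSn. Qed.

Lemma flat_nth (bs : seq (seq letter)) t x :
  all (fun b => size b == n) bs -> x < n ->
  nth ord0 (flatten bs) (t * n + x) = nth ord0 (nth [::] bs t) x.
Proof.
elim: bs t => [|b bs IH] t /=; first by rewrite !nth_nil.
move/andP=> [/eqP hb hbs] xn; rewrite nth_cat hb; case: t => [|t] /=.
  by rewrite mul0n add0n xn.
rewrite mulSn; ifs.
have -> : n + t * n + x - n = t * n + x by lia.
exact: IH.
Qed.
End Flat.

Section KMin.
Local Open Scope nat_scope.
Definition kmin (k : letter -> nat) := minn (k ord0) (minn (k (inord 1)) (k (inord 2))).

Lemma kmin_le (k : letter -> nat) i : kmin k <= k i.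
Proof.
case: i => [[|[|[|j]]] hj] //.
- have -> : Ordinal hj = ord0 by apply: val_inj.
  rewrite /kmin; lia.
- have -> : Ordinal hj = inord 1 by apply: val_inj; rewrite /= inordK.
  rewrite /kmin; lia.
- have -> : Ordinal hj = inord 2 by apply: val_inj; rewrite /= inordK.
  rewrite /kmin; lia.
Qed.

End KMin.

Section Count.
Local Open Scope nat_scope.
Variable n : nat.
Hypothesis n0 : 0 < n.
Variable k : letter -> nat.
Variable B : letter -> {set n.-tuple letter}.
Hypothesis Hk : forall i, 0 < k i.
Hypothesis HB : brinkhuis_triple k B.

Definition inB i (u : seq letter) := u \in [seq tval t | t <- enum (B i)].

Lemma inB_size i u : inB i u -> size u = n.
Proof. by case/mapP => t _ ->; rewrite size_tuple. Qed.

Lemma inB_ne i : exists u, inB i u.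
Proof.
have [_ [hc _]] := HB.
have : 0 < #|B i| by rewrite hc.
case/card_gt0P => t ht; exists (tval t); apply: map_f; by rewrite mem_enum.
Qed.

Lemma inB_tri : forall i i' i'' u v w, i != i' -> i' != i'' ->
  inB i u -> inB i' v -> inB i'' w -> forall st L, ~ sq (u ++ v ++ w) st L.
Proof.
move=> i i' i'' u v w ii ii' /mapP[tu hu ->] /mapP[tv hv ->] /mapP[tw hw ->] st L hs.
apply: (sq_not_sf _ _ _ hs).
have [_ [_ h]] := HB.
by apply: (h _ _ _ (sf3 _ _ _ ii ii')); rewrite -mem_enum.
Qed.

Lemma count_ineq m : a m * expn (kmin k) m <= a (m * n).
Proof.
pose D := ({w : m.-tuple letter | w \in A m} * m.-tuple 'I_(kmin k))%type.
pose def := nseq_tuple n (ord0 : letter).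
pose blocks (p : D) := [seq tval (nth def (enum (B x.1)) x.2)
   | x <- zip (tval (sval p.1)) (map val (tval p.2))].
pose F p := flatten (blocks p).
pose G (p : D) : (m * n).-tuple letter := insubd (nseq_tuple (m * n) (ord0 : letter)) (F p).
have Hc : forall (c : m.-tuple 'I_(kmin k)) j, j < m -> nth 0 (map val c) j < kmin k.
  move=> c j jm.
  have : nth 0 (map val c) j \in map val c by apply: mem_nth; rewrite size_map size_tuple.
  by case/mapP => o _ ->; exact: ltn_ord.
have Hbl : forall p j, j < m -> nth [::] (blocks p) j =
    tval (nth def (enum (B (nth ord0 (tval (sval p.1)) j))) (nth 0 (map val (tval p.2)) j)).
  move=> p j jm; rewrite (nth_map (ord0, 0)); last by rewrite size_zip size_map !size_tuple minnn.
  by rewrite nth_zip // size_map !size_tuple.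
have Hsz : forall p, size (blocks p) = m.
  by move=> p; rewrite size_map size_zip size_map !size_tuple minnn.
have Hall : forall p, all (fun b => size b == n) (blocks p).
  by move=> p; apply/allP => b /mapP [x _ ->]; rewrite size_tuple.
have HF : forall p, size (F p) = m * n.
  by move=> p; rewrite /F (flat_size _ _ (Hall p)) Hsz.
have Hin : forall p j, j < m ->
    inB (nth ord0 (tval (sval p.1)) j) (nth [::] (blocks p) j).
  move=> p j jm; rewrite Hbl //; apply: map_f; apply: mem_nth.
  rewrite -cardE (proj1 (proj2 HB)).
  exact: leq_trans (Hc _ _ jm) (kmin_le k _).
have GF : forall p, tval (G p) = F p.
  by move=> p; rewrite /G insubdK // -topredE /= HF.
have HG : forall p, G p \in A (m * n).
  move=> p; rewrite inE; apply/asboolP; rewrite GF.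
  apply: sf_of_nosq.
  apply: (@core n n0 inB inB_size inB_ne inB_tri m (tval (sval p.1)) (size_tuple _) _
     (nth [::] (blocks p)) (Hin p) (F p) (HF p)).
    move=> st L hsq; have := svalP p.1; rewrite inE => /asboolP hsf.
    exact: (sq_not_sf _ _ _ hsq hsf).
  by move=> t x tm xn; rewrite /F (flat_nth _ _ _ _ (Hall p)).
have Ginj : injective G.
  move=> [[w1 hw1] c1] [[w2 hw2] c2] eq.
  have eF := congr1 (@tval _ _) eq; rewrite !GF in eF.
  pose p1 : D := (exist _ w1 hw1, c1); pose p2 : D := (exist _ w2 hw2, c2).
  have eb : forall j, j < m -> nth [::] (blocks p1) j = nth [::] (blocks p2) j.
    move=> j jm; apply: (@eq_from_nth _ ord0).
      by rewrite (inB_size _ _ (Hin p1 j jm)) (inB_size _ _ (Hin p2 j jm)).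
    move=> x; rewrite (inB_size _ _ (Hin p1 j jm)) => xn.
    by rewrite -(flat_nth _ _ _ _ (Hall p1)) // -(flat_nth _ _ _ _ (Hall p2)) //; congr nth.
  have ew : forall j, j < m -> nth ord0 (tval w1) j = nth ord0 (tval w2) j.
    move=> j jm; apply: (@disj n n0 inB inB_size inB_tri _ _ (nth [::] (blocks p1) j)).
      exact: (Hin p1 j jm).
    rewrite eb //; exact: (Hin p2 j jm).
  have e1 : w1 = w2.
    apply: val_inj; apply: (@eq_from_nth _ ord0); first by rewrite !size_tuple.
    by move=> j; rewrite size_tuple; apply: ew.
  subst w2.
  have e1 : hw1 = hw2 by apply: bool_irrelevance.
  subst hw2.
  have e2 : c1 = c2.
    apply: val_inj; apply: (inj_map val_inj); apply: (@eq_from_nth _ 0).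
      by rewrite !size_map !size_tuple.
    move=> j; rewrite size_map size_tuple => jm.
    have := eb j jm; rewrite !Hbl //= => /val_inj/eqP.
    rewrite nth_uniq ?enum_uniq //.
      by move/eqP.
    1,2: by rewrite -cardE (proj1 (proj2 HB)); exact: leq_trans (Hc _ _ jm) (kmin_le k _).
  by rewrite e2.
have : #|[set G p | p : D]| <= #|A (m * n)|.
  by apply: subset_leq_card; apply/subsetP => _ /imsetP [p _ ->].
rewrite card_imset // /D card_prod card_sig card_tuple card_ord.
have -> : #|[pred x | x \in A m]| = #|A m| by apply: eq_card => x; rewrite inE.
by [].
Qed.

End Count.

Lemma INR_mul (p q : nat) : INR (muln p q) = INR p * INR q.
Proof. rewrite -multE; exact: mult_INR. Qed.

Lemma INR_exp (p N : nat) : INR (expn p N) = INR p ^ N.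
Proof. elim: N => [|N IH]; first by rewrite expn0. by rewrite expnS INR_mul IH. Qed.

Lemma exp_le x y : x <= y -> exp x <= exp y.
Proof.
move=> h; case: (Rle_lt_or_eq_dec _ _ h) => [h'|->].
  by left; apply: exp_increasing.
by right.
Qed.

Lemma exp_pow' x p : exp x ^ p = exp (INR p * x).
Proof.
elim: p => [|p IH]; first by rewrite /= Rmult_0_l exp_0.
have -> : exp x ^ p.+1 = exp x * exp x ^ p by [].
rewrite IH -exp_plus S_INR; congr exp; ring.
Qed.

Lemma ln_nat_ge0 p : 0 <= ln (INR p).
Proof.
case: p => [|p].
  rewrite /ln; case: Rlt_dec => h; [exfalso; move: h; rewrite /=; lra | right; reflexivity].
rewrite -ln_1; apply: ln_le; first lra.
rewrite S_INR; have := pos_INR p; lra.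
Qed.

Lemma b_ge1 p m : 1 <= Rpower (INR p) (/ INR m).
Proof.
rewrite /Rpower -exp_0; apply: exp_le.
apply: Rmult_le_pos; last exact: ln_nat_ge0.
case: m => [|m]; first by rewrite /= Rinv_0; lra.
left; apply: Rinv_0_lt_compat; apply: lt_0_INR; lia.
Qed.

Lemma lim_pow u (l : R) p : is_lim_seq u l -> is_lim_seq (fun j => u j ^ p) (l ^ p).
Proof.
move=> h; elim: p => [|p IH]; first exact: is_lim_seq_const.
exact (is_lim_seq_mult' _ _ _ _ h IH).
Qed.

Theorem lemma2 (n : nat) (k : 'I_3 -> nat) (B : 'I_3 -> {set n.-tuple 'I_3}) :
  (forall i, is_true (leq 1 (k i))) ->
  brinkhuis_triple k B ->
  forall s : R,
    is_lim_seq (fun m : nat => Rpower (INR (a m)) (/ INR m)) s ->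
    (Rpower (INR (minn (k ord0) (minn (k (inord 1)) (k (inord 2)))))
            (/ (INR n - 1)) <= s)%R.
Proof.
move=> Hk HB s Hs.
rewrite -/(kmin k).
have s1 : 1 <= s.
  by have := is_lim_seq_le (fun _ => 1) _ (Finite 1) (Finite s) (fun m => b_ge1 _ _) (is_lim_seq_const 1) Hs.
have kpos : (1 <= kmin k)%nat.
  by have := Hk ord0; have := Hk (inord 1); have := Hk (inord 2); rewrite /kmin; lia.
case: (ltnP n 2%nat) => hn.
  have -> : Rpower (INR (kmin k)) (/ (INR n - 1)) = 1; last by [].
  case: (eqVneq n 1%nat) => hn1.
    have -> : INR n - 1 = 0 by move: hn1 => ->; rewrite /=; lra.
    by rewrite Rinv_0 /Rpower Rmult_0_l exp_0.
  have hn0 : n = 0%nat by lia.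
  have e3 : (expn 3 n = 1)%nat by rewrite hn0.
  have hB : (#|B ord0| <= 1)%nat.
    by have := max_card (B ord0); rewrite card_tuple card_ord e3.
  have hK : kmin k = 1%nat.
    have := kmin_le k ord0; rewrite (proj1 (proj2 HB)) in hB; lia.
  by rewrite hK /= /Rpower ln_1 Rmult_0_r exp_0.
have n0 : (0 < n)%nat by lia.
have Hc := count_ineq _ n0 _ _ Hk HB.
set K := kmin k.
have a1 : (1 <= a 1)%nat.
  apply/card_gt0P; exists [tuple (ord0 : letter)]; rewrite inE; apply/asboolP.
  by apply: sf_of_nosq => st L [L0 [HL _]]; move: HL; rewrite size_tuple; lia.
have apos : forall j, (1 <= a (expn n j))%nat.
  elim=> [|j IH]; first by rewrite expn0.
  rewrite expnSr; have := Hc (expn n j).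
  have : (1 <= expn K (expn n j))%nat by rewrite expn_gt0 kpos.
  nia.
pose b m := Rpower (INR (a m)) (/ INR m).
have key : forall j, b (expn n j) * INR K <= b (expn n j.+1) ^ n.
  move=> j; rewrite /b expnSr.
  have M1 : (1 <= expn n j)%nat by rewrite expn_gt0 (ltnW hn).
  move: (expn n j) M1 (apos j) (Hc (expn n j)) => M M1 aM hc.
  have Mpos : 0 < INR M by apply: lt_0_INR; lia.
  have npos : 0 < INR n by apply: lt_0_INR; lia.
  have Kpos : 0 < INR K by apply: lt_0_INR; lia.
  have xpos : 0 < INR (a M) by apply: lt_0_INR; lia.
  have hy : INR (a M) * INR K ^ M <= INR (a (muln M n)).
    by rewrite -INR_exp -INR_mul; apply: le_INR; apply/leP.
  have hl : ln (INR (a M)) + INR M * ln (INR K) <= ln (INR (a (muln M n))).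
    rewrite -ln_pow // -ln_mult //; last by apply: pow_lt.
    apply: ln_le => //; apply: Rmult_lt_0_compat => //; exact: pow_lt.
  rewrite /Rpower exp_pow' -(exp_ln _ Kpos) -exp_plus; apply: exp_le.
  rewrite INR_mul.
  have -> : INR n * (/ (INR M * INR n) * ln (INR (a (muln M n)))) =
      / INR M * ln (INR (a (muln M n))) by field; lra.
  have -> : / INR M * ln (INR (a M)) + ln (INR K) =
      / INR M * (ln (INR (a M)) + INR M * ln (INR K)) by field; lra.
  apply: Rmult_le_compat_l => //; left; exact: Rinv_0_lt_compat.
have hu : is_lim_seq (fun j => b (expn n j)) s.
  apply: (is_lim_seq_subseq b s (fun j => expn n j)) => //.
  by apply: eventually_subseq => j; apply/ltP; rewrite ltn_exp2l.
have hv : is_lim_seq (fun j => b (expn n j.+1)) s.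
  apply: (is_lim_seq_subseq b s (fun j => expn n j.+1)) => //.
  by apply: eventually_subseq => j; apply/ltP; rewrite ltn_exp2l.
have hsK : s * INR K <= s ^ n.
  by have := is_lim_seq_le _ _ (Finite (s * INR K)) (Finite (s ^ n)) key
    (is_lim_seq_mult' _ _ _ _ hu (is_lim_seq_const _)) (lim_pow _ _ n hv).
have hnp : n = (subn n 1).+1 by lia.
have hK : INR K <= s ^ (subn n 1).
  apply: (Rmult_le_reg_l s); first lra.
  have <- : s ^ n = s * s ^ (subn n 1) by rewrite {1}hnp.
  exact: hsK.
have Kpos : 0 < INR K by apply: lt_0_INR; lia.
have hn1 : INR n - 1 = INR (subn n 1) by rewrite minus_INR /=; [lra | apply/leP; lia].
have n1pos : 0 < INR (subn n 1) by apply: lt_0_INR; lia.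
rewrite hn1.
apply: Rle_trans (Rle_Rpower_l _ _ _ _ (conj Kpos hK)) _.
  by left; apply: Rinv_0_lt_compat.
rewrite -Rpower_pow; last lra.
rewrite Rpower_mult Rinv_r; last lra.
rewrite Rpower_1; last lra.
by right.
Qed.
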